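(* Every monotonically normal, $nwd$-separable space is $D$-separable.
   Context: A space is $nwd$-separable if it has a dense subset which is a countable union of nowhere dense sets. A space $X$ is $D$-separable if for every sequence $\{D_n:n<\omega\}$ of dense subsets of $X$ there are discrete sets $E_n\subseteq D_n$ with $\bigcup_{n<\omega}E_n$ dense in $X$. *)

(* Defs.v *)
From HB Require Import structures.
From mathcomp Require Import all_boot all_order.
From mathcomp Require Import all_classical all_reals all_analysis.

Set Implicit Arguments.
Unset Strict Implicit.
Unset Printing Implicit Defensive.

Local Open Scope classical_set_scope.

Definition nowhere_dense {T : topologicalType} (N : set T) : Prop :=
  interior (closure N) = set0.

Definition discrete_set {T : topologicalType} (E : set T) : Prop :=
  forall x, E x -> exists U : set T, [/\ open U, U x & U `&` E = [set x]].

Definition monotonically_normal (T : topologicalType) : Prop :=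
  @accessible_space T /\
  exists G : set T -> set T -> set T,
    (forall A B, closed A -> closed B -> A `&` B = set0 ->
       [/\ open (G A B), A `<=` G A B & closure (G A B) `<=` ~` B]) /\
    (forall A B A' B', closed A -> closed B -> A `&` B = set0 ->
       closed A' -> closed B' -> A' `&` B' = set0 ->
       A `<=` A' -> B' `<=` B -> G A B `<=` G A' B').

Definition nwd_separable (T : topologicalType) : Prop :=
  exists N : nat -> set T,
    (forall n, nowhere_dense (N n)) /\ dense (\bigcup_n N n).

Definition D_separable (T : topologicalType) : Prop :=
  forall D : nat -> set T, (forall n, dense (D n)) ->
    exists E : nat -> set T,
      (forall n, E n `<=` D n /\ discrete_set (E n)) /\
      dense (\bigcup_n E n).

(* Main.v *)
Require Import Defs.
From mathcomp Require Import all_boot all_order.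
From mathcomp Require Import all_classical all_reals all_analysis.

Unset Implicit Arguments.
Unset Strict Implicit.
Unset Printing Implicit Defensive.
Local Open Scope classical_set_scope.

Section MN.
Variable T : topologicalType.

Lemma op_nbhs (U : set T) x : open U -> U x -> nbhs x U.
Proof. by move=> oU Ux; apply: open_nbhs_nbhs; split. Qed.

Lemma clos_meet (A U : set T) x : closure A x -> open U -> U x -> A `&` U !=set0.
Proof. by move=> cA oU Ux; apply: cA; apply: op_nbhs. Qed.

Variable G : set T -> set T -> set T.
Hypothesis T1 : @accessible_space T.
Hypothesis HG : forall A B, closed A -> closed B -> A `&` B = set0 ->
       [/\ open (G A B), A `<=` G A B & closure (G A B) `<=` ~` B].
Hypothesis HM : forall A B A' B', closed A -> closed B -> A `&` B = set0 ->
       closed A' -> closed B' -> A' `&` B' = set0 ->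
       A `<=` A' -> B' `<=` B -> G A B `<=` G A' B'.

Definition H (x : T) (U : set T) := G [set x] (~` U) `&` ~` closure (G (~` U) [set x]).

Lemma cl1 (x : T) : closed [set x]. Proof. exact: accessible_closed_set1. Qed.

Lemma disj1 x (U : set T) : U x -> [set x] `&` ~` U = set0.
Proof. by move=> Ux; rewrite -subset0 => y [/= yx]; apply; rewrite yx. Qed.

Lemma disj1' x (U : set T) : U x -> ~` U `&` [set x] = set0.
Proof. by move=> Ux; rewrite -subset0 => y [/= + yx]; apply; rewrite yx. Qed.

Lemma H_open (x : T) U : open U -> U x -> open (H x U).
Proof.
move=> oU Ux; apply: openI.
  by case: (HG _ _ (cl1 x) (open_closedC oU) (disj1 _ _ Ux)).
exact/closed_openC/closed_closure.
Qed.

Lemma H_in (x : T) U : open U -> U x -> H x U x.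
Proof.
move=> oU Ux; split.
  by case: (HG _ _ (cl1 x) (open_closedC oU) (disj1 _ _ Ux)) => _ + _; apply.
move=> cx.
by case: (HG _ _ (open_closedC oU) (cl1 x) (disj1' _ _ Ux)) => _ _ /(_ x cx); apply.
Qed.

Lemma H_sub (x : T) U : open U -> U x -> H x U `<=` U.
Proof.
move=> oU Ux y [Gy _].
case: (HG _ _ (cl1 x) (open_closedC oU) (disj1 _ _ Ux)) => _ _ /(_ y) h.
by apply: contrapT => nU; apply: (h (subset_closure Gy)).
Qed.

Lemma H_key (x : T) U y V p : open U -> U x -> open V -> V y ->
  H x U p -> H y V p -> V x \/ U y.
Proof.
move=> oU Ux oV Vy [_ Hp] [Gp _].
apply: contrapT => /not_orP[nVx nUy]; apply: Hp; apply: subset_closure.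
have xy : x <> y by move=> e; apply: nVx; rewrite e.
have d : [set y] `&` [set x] = set0.
  by rewrite -subset0 => z [/= -> ]; apply: nesym.
have p1 : G [set y] [set x] p.
  apply: (HM _ _ _ _ (cl1 y) (open_closedC oV) (disj1 _ _ Vy) (cl1 y) (cl1 x) d) => //.
  by move=> z ->.
apply: (HM _ _ _ _ (cl1 y) (cl1 x) d (open_closedC oU) (cl1 x) (disj1' _ _ Ux)) => //.
by move=> z ->.
Qed.


Lemma main_lemma (N Dn : set T) : nowhere_dense N -> dense Dn ->
  exists E, [/\ E `<=` Dn, discrete_set E &
    (forall x U, N x -> open U -> U x -> U `&` E !=set0)].
Proof.
move=> nN dD.
pose F := closure N; pose W := ~` F.
have oW : open W by apply: closed_openC; apply: closed_closure.
have Wd : forall Q2, open Q2 -> Q2 !=set0 -> Q2 `&` W !=set0.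
  move=> Q oQ [q0 Qq]; apply: contrapT => hn.
  have QF : Q `<=` F.
    move=> z Qz; apply: contrapT => nF; apply: hn; exists z; split => //.
  have : Q `<=` interior F by rewrite -open_subsetE.
  by rewrite /F nN => /(_ q0 Qq).
pose Coll := [set p : T * set T | [/\ Dn p.1, open p.2, p.2 p.1 & p.2 `<=` W]].
pose B := fun p : T * set T => H p.1 p.2.
have [A [ACo trA maxA]] := ex_maximal_disjoint_subcollection B Coll.
exists (fst @` A); split.
- by move=> _ [p Ap <-]; case: (ACo p Ap).
- move=> _ [p Ap <-]; have [_ op2 p21 _] := ACo p Ap.
  exists (H p.1 p.2); split.
  + exact: H_open.
  + exact: H_in.
  apply/seteqP; split.
    move=> z [Hz [q Aq qz]]; have [_ oq2 q21 _] := ACo q Aq.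
    have pq : p = q.
      apply: trA => //; exists z; split => //; rewrite /B -qz; exact: H_in.
    by rewrite /= -qz pq.
  move=> z /= ->; split; first exact: H_in.
  by exists p.
- move=> x U Nx oU Ux.
  have oHx : open (H x U) by apply: H_open.
  have [t0 [Ho Wo]] := Wd _ oHx (ex_intro _ x (H_in x U oU Ux)).
  have [d [[Hd Wd'] Dd]] := dD _ (ex_intro _ t0 (conj Ho Wo)) (openI oHx oW).
  have [[q [Aq [p [Hp Bp]]]]|hno] :=
    pselect (exists q, A q /\ H x U `&` B q !=set0).
    have [_ oq2 q21 q2W] := ACo q Aq.
    have [h|h] := H_key x U q.1 q.2 p oU Ux oq2 q21 Hp Bp.
      by exfalso; apply: (q2W x h); apply: subset_closure.
    by exists q.1; split => //; exists q.
  exfalso.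
  pose Q2 := H x U `&` W.
  have oQ2 : open Q2 by apply: openI.
  have BdO : B (d, Q2) `<=` H x U.
    by move=> z /(H_sub d Q2 oQ2 (conj Hd Wd')) [].
  apply: (maxA (A `|` [set (d, Q2)])).
  + split; first by move=> z Az; left.
    move=> /(_ (d, Q2) (or_intror erefl)) AdO; apply: hno; exists (d, Q2); split => //.
    exists d; split => //; apply: H_in => //; exact: (conj Hd Wd').
  + move=> z [/ACo //|/= ->]; split => //=. by move=> w [].
  + move=> i j [Ai|/= ->] [Aj|/= ->] hij.
    * exact: trA.
    * exfalso; apply: hno; exists i; split => //.
      case: hij => w [Bi Bj]; exists w; split => //; exact: BdO.
    * exfalso; apply: hno; exists j; split => //.
      case: hij => w [Bi Bj]; exists w; split => //; exact: BdO.
    * by [].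
Qed.

End MN.

Theorem theorem6p7 (T : topologicalType) :
  monotonically_normal T -> nwd_separable T -> D_separable T.
Proof.
move=> [T1 [G [HG HM]]] [N [nN dN]] D dD.
have : forall n, exists E, [/\ E `<=` D n, discrete_set E &
    (forall x U, N n x -> open U -> U x -> U `&` E !=set0)].
  move=> n; exact: (main_lemma T G T1 HG HM (N n) (D n) (nN n) (dD n)).
move=> /choice [E hE]; exists E; split.
  by move=> n; case: (hE n).
move=> Q2 Q20 oQ2.
have [z [Q2z [n _ Nz]]] := dN Q2 Q20 oQ2.
have [_ _ h] := hE n.
have [w [Q2w Ew]] := h z Q2 Nz oQ2 Q2z.
by exists w; split => //; exists n.
Qed.
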